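(* Let $X$ be a real Hilbert space with closed unit ball $\mathcal B$, $\Omega\subseteq X$ a closed symmetric convex set, $V\subseteq X$ a subspace, and $R,Z,\lambda\ge1$. If (i) $\mathcal B/V\subseteq R(\Omega\cap\mathcal B)/V$ and (ii) $\Omega\cap V\subseteq Z\mathcal B$, then $(\Omega+\lambda\mathcal B)\cap V\subseteq Z(3R\lambda+1)\mathcal B$.
   Context: For $A\subseteq X$, $A/V=\{a+V:a\in A\}$; (i) means every element of $\mathcal B$ differs by an element of $V$ from some element of $R(\Omega\cap\mathcal B)$. *)

(* Defs.v *)
From HB Require Import structures.
From mathcomp Require Import all_boot all_order all_algebra.
From mathcomp Require Import all_classical all_reals all_analysis.
Set Implicit Arguments. Unset Strict Implicit. Unset Printing Implicit Defensive.
Import Order.TTheory GRing.Theory Num.Theory.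
Import numFieldNormedType.Exports.
Local Open Scope classical_set_scope.
Local Open Scope ring_scope.

(* A real Hilbert space: a complete normed space over the reals whose norm
   is induced by an inner product [inner] (symmetric, bilinear, with
   ||x||^2 = <x,x>; positive-definiteness follows from the norm). *)
Definition hilbert_inner (R : realType) (X : completeNormedModType R)
  (inner : X -> X -> R) : Prop :=
  [/\ (forall x y, inner x y = inner y x),
      (forall a x y z, inner (a *: x + y) z = a * inner x z + inner y z)
    & (forall x, `|x| ^+ 2 = inner x x)].

Definition unit_ball (R : realType) (X : normedModType R) : set X :=
  [set x | `|x| <= 1].

Definition scale_set (R : realType) (X : normedModType R) (t : R) (A : set X)
  : set X := [set t *: a | a in A].

Definition minkowski_sum (R : realType) (X : normedModType R) (A B : set X)
  : set X := [set a + b | a in A & b in B].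

Definition symmetric_set (R : realType) (X : normedModType R) (A : set X) :=
  forall x, A x -> A (- x).

Definition convex_set' (R : realType) (X : normedModType R) (A : set X) :=
  forall x y (t : R), A x -> A y -> 0 <= t -> t <= 1 ->
    A (t *: x + (1 - t) *: y).

Definition lin_subspace (R : realType) (X : normedModType R) (V : set X) :=
  V 0 /\ forall (a : R) x y, V x -> V y -> V (a *: x + y).

(* A/V included in B/V: every a in A differs by an element of V from some b in B *)
Definition quot_subset (R : realType) (X : normedModType R) (V A B : set X) :=
  forall a, A a -> exists2 b, B b & V (a - b).
Arguments unit_ball {R} X.

(* Main.v *)
Require Import Defs.
From HB Require Import structures.
From mathcomp Require Import all_boot all_order all_algebra.
From mathcomp Require Import all_classical all_reals all_analysis.
From mathcomp Require Import ring lra.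
Import Order.TTheory GRing.Theory Num.Theory.
Import numFieldNormedType.Exports.
Local Open Scope classical_set_scope.
Local Open Scope ring_scope.

Theorem lemma9p11 (R : realType) (X : completeNormedModType R)
  (inner : X -> X -> R) (Omega V : set X) (Rc Z lam : R) :
  hilbert_inner inner ->
  closed Omega -> symmetric_set Omega -> convex_set' Omega ->
  lin_subspace V ->
  1 <= Rc -> 1 <= Z -> 1 <= lam ->
  quot_subset V (unit_ball X) (scale_set Rc (Omega `&` unit_ball X)) ->
  Omega `&` V `<=` scale_set Z (unit_ball X) ->
  minkowski_sum Omega (scale_set lam (unit_ball X)) `&` V
    `<=` scale_set (Z * (3 * Rc * lam + 1)) (unit_ball X).
Proof.
move=> _ _ _ Hconv [V0 Vlin] HR HZ Hl Hq HOV x [[w Ow [bx [b Bb <-] <-]] Vx].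
have [bb [u [Ou Bu] <-] Vv] := Hq b Bb.
rewrite /unit_ball /= in Bb Bu.
set v := b - Rc *: u in Vv.
set c := 1 + lam * Rc.
have c0 : 0 < c by rewrite /c; nra.
set y := w + (lam * Rc) *: u.
have Ey : y = w + lam *: b + (- lam) *: v.
  by rewrite /y /v scaleNr scalerBr opprB scalerA -addrA [lam *: b + _]addrC subrK.
have Vy : V y.
  by rewrite Ey addrC; apply: Vlin.
have Oz : Omega (c^-1 *: y).
  have -> : c^-1 *: y = c^-1 *: w + (1 - c^-1) *: u.
    rewrite /y scalerDr scalerA; congr (_ + _ *: _).
    rewrite (_ : lam * Rc = c - 1); last by rewrite /c; ring.
    by field; rewrite gt_eqF.
  apply: Hconv => //; first by rewrite invr_ge0 ltW.
  by rewrite invr_le1 //; [rewrite /c; nra | rewrite unitfE gt_eqF].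
have Vz : V (c^-1 *: y) by rewrite -[c^-1 *: y]addr0; apply: Vlin.
have [a Ba Ea] := HOV _ (conj Oz Vz).
rewrite /unit_ball /= in Ba.
have nz : `|c^-1 *: y| <= Z.
  by rewrite -Ea normrZ ger0_norm; [nra | lra].
have ny : `|y| <= c * Z.
  rewrite -[y](scalerKV (lt0r_neq0 c0)) normrZ ger0_norm; last lra.
  by rewrite ler_pM2l.
have nv : `|v| <= 1 + Rc.
  rewrite /v (le_trans (ler_normB _ _)) // normrZ ger0_norm; last lra.
  nra.
have nx : `|w + lam *: b| <= Z * (3 * Rc * lam + 1).
  have -> : w + lam *: b = y + lam *: v by rewrite Ey scaleNr subrK.
  rewrite (le_trans (ler_normD _ _)) // normrZ ger0_norm; last lra.
  have h1 : lam * `|v| <= lam * (1 + Rc) by rewrite ler_pM2l; lra.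
  have h2 : 0 <= (Z - 1) * (lam * Rc) by apply: mulr_ge0; [lra| apply: mulr_ge0; lra].
  have h3 : 0 <= (Rc - 1) * lam by apply: mulr_ge0; lra.
  rewrite /c in ny.
  set p := lam * Rc in ny h1 h2 h3 *.
  have -> : 3 * Rc * lam = 3 * p by rewrite /p; ring.
  set q := Z * p in ny h2 *.
  have -> : Z * (3 * p + 1) = 3 * q + Z by rewrite /q; ring.
  have : (1 + p) * Z = Z + q by rewrite /q; ring.
  have : lam * (1 + Rc) = lam + p by rewrite /p; ring.
  have : (Z - 1) * p = q - p by rewrite /q; ring.
  have : (Rc - 1) * lam = p - lam by rewrite /p; ring.
  lra.
have K0 : 0 < Z * (3 * Rc * lam + 1).
  apply: mulr_gt0; first lra.
  have : 0 < Rc * lam by apply: mulr_gt0; lra.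
  lra.
exists ((Z * (3 * Rc * lam + 1))^-1 *: (w + lam *: b)).
  rewrite /unit_ball /= normrZ ger0_norm; last by rewrite invr_ge0 ltW.
  by rewrite ler_pdivrMl // mulr1.
by rewrite scalerA mulfV ?gt_eqF // scale1r.
Qed.
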